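(* Let $\Delta\ge 2$ be an integer. Every graph $G$ on $n\ge 1$ vertices with maximum degree $\Delta(G)\le\Delta$ has bandwidth \[ \mathrm{bw}(G)\le \frac{6n}{\log_{\Delta}(n/s(G))}. \]
   Context: The bandwidth $\mathrm{bw}(G)$ of a graph $G=(V,E)$ on $n$ vertices is the minimum positive integer $b$ such that there is a labelling of $V$ by the numbers $1,\dots,n$ (bijectively) in which the labels of any two adjacent vertices differ by at most $b$. For a real $\tfrac12\le\alpha<1$ and $s\in\mathbb N$, a set $S\subseteq V$ is an $(s,\alpha)$-separator of $G$ if there are $A,B\subseteq V$ with $V=A\,\dot\cup\, B\,\dot\cup\, S$ (disjoint union), $|S|\le s$, $|A|,|B|\le\alpha|V|$, and no edge of $G$ has one endpoint in $A$ and the other in $B$. The separation number $s(G)$ is the smallest $s$ such that every subgraph $G'$ of $G$ has an $(s,2/3)$-separator. (One always has $1\le s(G)\le n$; if $s(G)=n$ the right-hand side is read as $+\infty$.) *)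

(* Defs.v *)
From Stdlib Require Import Reals.
From mathcomp Require Import all_boot.
Set Implicit Arguments. Unset Strict Implicit. Unset Printing Implicit Defensive.

Definition simple_graph (T : finType) (e : rel T) : Prop :=
  symmetric e /\ irreflexive e.

Definition maxdeg_le (T : finType) (e : rel T) (D : nat) : Prop :=
  forall v : T, #|[set u | e v u]| <= D.

(* A labelling of V by 0..n-1 (a shift of 1..n), bijective (injective between
   sets of equal size n = #|T|), such that adjacent labels differ by <= b. *)
Definition bw_ok (T : finType) (e : rel T) (b : nat) : bool :=
  (0 < b) &&
  [exists f : {ffun T -> 'I_#|T|},
     injectiveb f &&
     [forall u, forall v, e u v ==> ((f u - f v <= b) && (f v - f u <= b))]].

Lemma bw_exists (T : finType) (e : rel T) : exists b, bw_ok e b.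
Proof.
exists #|T|.+1; apply/andP; split => //.
apply/existsP; exists [ffun x => enum_rank x]; apply/andP; split.
  by apply/injectiveP => x y; rewrite !ffunE => /enum_rank_inj.
apply/forallP => u; apply/forallP => v; apply/implyP => _; rewrite !ffunE.
apply/andP; split; apply: leq_trans (leq_subr _ _) _;
  by apply: ltnW; rewrite ltnS ltnW.
Qed.

Definition bandwidth (T : finType) (e : rel T) : nat := ex_minn (bw_exists e).

Definition is_subgraph (T : finType) (e : rel T) (V' : {set T})
    (E' : {set T * T}) : bool :=
  [forall u, forall v,
     (((u, v) \in E') ==> [&& e u v, u \in V' & v \in V']) &&
     (((u, v) \in E') == ((v, u) \in E'))].

Definition has_sep23 (T : finType) (V' : {set T}) (E' : {set T * T})
    (s : nat) : bool :=
  [exists S : {set T}, exists A : {set T}, exists B : {set T},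
     [&& A :|: B :|: S == V',
         [disjoint A & B], [disjoint A & S], [disjoint B & S],
         #|S| <= s,
         3 * #|A| <= 2 * #|V'|, 3 * #|B| <= 2 * #|V'| &
         [forall a in A, forall b in B, (a, b) \notin E']]].

Definition sep_ok (T : finType) (e : rel T) (s : nat) : bool :=
  [forall V' : {set T}, forall E' : {set T * T},
     is_subgraph e V' E' ==> has_sep23 V' E' s].

Lemma sep_exists (T : finType) (e : rel T) : exists s, sep_ok e s.
Proof.
exists #|T|; apply/forallP => V'; apply/forallP => E'; apply/implyP => _.
apply/existsP; exists V'; apply/existsP; exists set0; apply/existsP; exists set0.
rewrite !set0U eqxx -!setI_eq0 !set0I eqxx max_card /= !cards0 muln0 /=.
by apply/forallP => a; rewrite in_set0.
Qed.

Definition sepnum (T : finType) (e : rel T) : nat := ex_minn (sep_exists e).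

(* Main.v *)
Require Import Defs.

From mathcomp Require Import all_boot zify.
Set Implicit Arguments. Unset Strict Implicit. Unset Printing Implicit Defensive.

Lemma bw_le (T : finType) (e : rel T) b : bw_ok e b -> bandwidth e <= b.
Proof. rewrite /bandwidth; case: ex_minnP => m _ H; exact: H. Qed.

Section KeyOrder.
Variables (T : finType) (e : rel T) (k : T -> nat).

Definition bef (u w : T) : bool :=
  (k w < k u) || ((k w == k u) && (enum_rank w < enum_rank u)).

Definition pos (u : T) : nat := #|[set w | bef u w]|.

Lemma bef_irr u : bef u u = false.
Proof. by rewrite /bef ltnn eqxx ltnn. Qed.

Lemma bef_trans u v w : bef u v -> bef v w -> bef u w.
Proof.
rewrite /bef => /orP[H1|/andP[/eqP H1 H2]] /orP[H3|/andP[/eqP H3 H4]].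
- by rewrite (ltn_trans H3 H1).
- by rewrite H3 H1.
- by rewrite -H1 H3.
- by rewrite H3 H1 eqxx (ltn_trans H4 H2) orbT.
Qed.

Lemma bef_total u v : u != v -> bef u v || bef v u.
Proof.
move=> Huv; rewrite /bef.
case: (ltngtP (k v) (k u)) => //= Hk.
case: (ltngtP (enum_rank v) (enum_rank u)) => //= Hr.
by move/ord_inj/enum_rank_inj: Hr => Hr; rewrite Hr eqxx in Huv.
Qed.

Lemma bef_k u v : bef u v -> k v <= k u.
Proof. by rewrite /bef => /orP[/ltnW|/andP[/eqP -> _]]. Qed.

Lemma pos_lt u : pos u < #|T|.
Proof.
have H1 := cardsC1 u; have Hp : 0 < #|T| by apply/card_gt0P; exists u.
apply: (@leq_trans #|[set~ u]|.+1); last by rewrite H1; lia.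
rewrite ltnS subset_leq_card //.
by apply/subsetP => w; rewrite !inE; apply: contraTneq => ->; rewrite bef_irr.
Qed.

Lemma pos_mono u v : bef u v -> pos v < pos u.
Proof.
move=> Huv; apply: proper_card; apply/properP; split.
  by apply/subsetP => w; rewrite !inE => /(bef_trans Huv).
by exists v; rewrite !inE ?Huv ?bef_irr.
Qed.

Lemma pos_inj : injective pos.
Proof.
move=> u v Huv; apply/eqP; apply: contraT => Hne.
case/orP: (bef_total Hne) => /pos_mono; rewrite Huv ltnn //.
Qed.

Lemma pos_diff u v : bef u v ->
  pos u - pos v < #|[set w | k v <= k w <= k u]|.
Proof.
move=> Huv.
have Hsub : [set w | bef v w] \subset [set w | bef u w].
  by apply/subsetP => w; rewrite !inE => /(bef_trans Huv).
rewrite /pos (cardsD1 u [set w | k v <= k w <= k u]) inE (bef_k Huv) leqnn /=.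
rewrite add1n ltnS -(setIidPr Hsub) -cardsD; apply: subset_leq_card.
apply/subsetP => w; rewrite !inE => /andP[Hnv Hu].
rewrite (bef_k Hu) andbT.
apply/andP; split; first by apply: contraTneq Hu => ->; rewrite bef_irr.
rewrite leqNgt; apply: contra Hnv => Hlt; rewrite /bef Hlt //.
Qed.

Lemma key_order b : 0 < b ->
  (forall u v, e u v ->
     #|[set w | minn (k u) (k v) <= k w <= maxn (k u) (k v)]| <= b.+1) ->
  bandwidth e <= b.
Proof.
move=> b0 H; apply: bw_le; apply/andP; split => //.
apply/existsP; exists [ffun u => Ordinal (pos_lt u)]; apply/andP; split.
  apply/injectiveP => u v; rewrite !ffunE => /(congr1 val) /=; exact: pos_inj.
apply/forallP => u; apply/forallP => v; apply/implyP => Huv; rewrite !ffunE /=.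
have Hb := H u v Huv.
case: (eqVneq u v) => [->|Hne]; first by rewrite subnn.
case/orP: (bef_total Hne) => Hb'.
- have := pos_diff Hb'; have := pos_mono Hb'; have := bef_k Hb'.
  move=> Hk Hp Hd.
  rewrite (minn_idPr Hk) (maxn_idPl Hk) in Hb.
  apply/andP; split; last by rewrite (eqP (ltnW Hp : pos v <= pos u)) ?leq0n //;
     rewrite subn_eq0 ltnW.
  by rewrite -ltnS; apply: leq_trans Hd Hb.
- have := pos_diff Hb'; have := pos_mono Hb'; have := bef_k Hb'.
  move=> Hk Hp Hd.
  rewrite (minn_idPl Hk) (maxn_idPr Hk) in Hb.
  apply/andP; split; first by move: (ltnW Hp); rewrite -subn_eq0 => /eqP ->.
  by rewrite -ltnS; apply: leq_trans Hd Hb.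
Qed.
End KeyOrder.


Section Dist.
Variables (T : finType) (e : rel T) (Dl : nat).
Hypothesis esym : symmetric e.
Hypothesis hdeg : maxdeg_le e Dl.

Definition nbhd (Y : {set T}) : {set T} := [set w | [exists u in Y, e u w]].

Lemma nbhdP (Y : {set T}) w : reflect (exists2 u, u \in Y & e u w) (w \in nbhd Y).
Proof.
rewrite inE; apply: (iffP existsP) => [[u /andP[H1 H2]]|[u H1 H2]]; exists u => //.
by rewrite H1.
Qed.

Lemma card_nbhd (Y : {set T}) : #|nbhd Y| <= Dl * #|Y|.
Proof.
elim: {Y}#|Y| {-2}Y (eqxx #|Y|) => [|c IH] Y /eqP HY.
  move: HY => /eqP; rewrite cards_eq0 => /eqP ->; rewrite cards0 muln0 leqn0 cards_eq0.
  by apply/eqP/setP => w; rewrite in_set0; apply/negbTE/nbhdP => -[u]; rewrite inE.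
have : 0 < #|Y| by rewrite HY.
case/card_gt0P => u Hu.
have HY' : #|Y :\ u| == c by rewrite (cardsD1 u Y) Hu add1n in HY; case: HY => ->.
have Hs : nbhd Y \subset nbhd (Y :\ u) :|: [set w | e u w].
  apply/subsetP => w Hw; have [x Hx Hxw] := elimT (nbhdP Y w) Hw; apply/setUP.
  case: (eqVneq x u) => [<-|Hne]; first by right; rewrite inE.
  by left; apply/nbhdP; exists x => //; rewrite !inE Hne.
apply: leq_trans (subset_leq_card Hs) _.
apply: leq_trans (leq_card_setU _ _) _.
rewrite HY mulnS addnC; apply: leq_add; first exact: hdeg.
by move: (IH _ HY'); rewrite (eqP HY').
Qed.

Lemma nbhdS (Y Z : {set T}) : Y \subset Z -> nbhd Y \subset nbhd Z.
Proof.
move=> /subsetP HYZ; apply/subsetP => w /nbhdP [u Hu H]; apply/nbhdP; exists u => //.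
exact: HYZ.
Qed.

Variable X : {set T}.

Definition ball (t : nat) : {set T} := iter t (fun Y => Y :|: nbhd Y) X.

Lemma ballS t : ball t.+1 = ball t :|: nbhd (ball t).
Proof. by []. Qed.

Lemma ball_mono t t' : t <= t' -> ball t \subset ball t'.
Proof.
elim: t' => [|t' IH]; first by rewrite leqn0 => /eqP ->.
rewrite leq_eqVlt => /orP[/eqP ->|/IH H] //.
by rewrite ballS; apply: subset_trans H (subsetUl _ _).
Qed.

Definition sph (t : nat) : {set T} :=
  if t is t'.+1 then ball t :\: ball t' else X.

Lemma sph_nbhd t : sph t.+1 \subset nbhd (sph t).
Proof.
apply/subsetP => w; rewrite /sph => /setDP [Hb Hn]; move: Hb; rewrite ballS => /setUP [H|H].
  by rewrite H in Hn.
case/nbhdP: H => u Hu Huw; apply/nbhdP; exists u => //.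
case: t Hn Hu => [|t] Hn Hu //.
apply/setDP; split => //; apply: contra Hn => Hu'.
by rewrite ballS; apply/setUP; right; apply/nbhdP; exists u.
Qed.

Lemma card_sph t : #|sph t| <= Dl ^ t * #|X|.
Proof.
elim: t => [|t IH]; first by rewrite expn0 mul1n.
apply: leq_trans (subset_leq_card (sph_nbhd t)) _.
apply: leq_trans (card_nbhd _) _.
by rewrite expnS -mulnA leq_mul2l IH orbT.
Qed.

Definition NN := #|T|.+1.
Definition dist (v : T) : nat := find (fun j => v \in ball j) (iota 0 NN).

Lemma dist_le v : dist v <= NN.
Proof. by have := find_size (fun j => v \in ball j) (iota 0 NN); rewrite size_iota. Qed.

Lemma dist_ball v : dist v < NN -> v \in ball (dist v).
Proof.
move=> H; have : has (fun j => v \in ball j) (iota 0 NN) by rewrite has_find size_iota.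
move/(nth_find 0); by rewrite nth_iota.
Qed.

Lemma dist_nball v i : i < dist v -> v \notin ball i.
Proof.
move=> H; have Hi : i < NN := leq_trans H (dist_le v).
by move: (before_find 0 H); rewrite nth_iota // add0n => ->.
Qed.

Lemma dist_min v i : i < NN -> v \in ball i -> dist v <= i.
Proof. by move=> Hi Hv; rewrite leqNgt; apply/negP => /dist_nball; rewrite Hv. Qed.

Lemma dist0 v : (dist v == 0) = (v \in X).
Proof.
rewrite /dist /NN /= [iota _ _]/=.
by case: ifP.
Qed.

Lemma dist_edge u v : e u v -> dist v <= (dist u).+1.
Proof.
move=> Huv.
case: (ltnP (dist u).+1 NN) => H; last by apply: leq_trans (dist_le v) _.
apply: dist_min => //; rewrite ballS inE; apply/orP; right.
apply/nbhdP; exists u => //; apply: dist_ball; exact: ltnW.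
Qed.

Lemma dist_sph v : dist v < NN -> v \in sph (dist v).
Proof.
move=> H; rewrite /sph; case Hd: (dist v) => [|t].
  by move/eqP: Hd; rewrite dist0.
rewrite inE -Hd dist_ball // andbT; apply: dist_nball; rewrite Hd.
exact: ltnSn.
Qed.

Lemma card_dist t : t < NN -> #|[set v | dist v == t]| <= Dl ^ t * #|X|.
Proof.
move=> Ht; apply: leq_trans (card_sph t); apply: subset_leq_card.
by apply/subsetP => v; rewrite inE => /eqP Hv; rewrite -Hv dist_sph // Hv.
Qed.

End Dist.


Section Core.
Variables (T : finType) (e : rel T) (Dl : nat).
Hypothesis esym : symmetric e.
Hypothesis hdeg : maxdeg_le e Dl.
Variables (X : {set T}) (sd : T -> bool) (a : T -> nat) (Tm L : nat).
Hypothesis Ha : forall v, v \notin X -> 0 < a v <= Tm.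
Hypothesis Hedge : forall u v, u \notin X -> v \notin X -> e u v -> sd u = sd v /\ a u = a v.
Hypothesis Hload : forall bb t, #|[set v | (v \notin X) && (sd v == bb) && (a v == t)]| <= L.
Hypothesis HTm : 0 < Tm <= #|T|.

Local Notation d := (dist e X).

Definition off v := if v \in X then 0 else if d v < a v then (d v).*2 else (a v).*2.-1.
Definition K0 := Tm.*2.+2.
Definition kk (b : bool) o := if b then K0 + o else K0 - o.
Definition key v := kk (sd v) (off v).
Definition sig' t := if t < Tm then Dl ^ t * #|X| else 0.

Lemma d_pos v : v \notin X -> 0 < d v.
Proof. by move=> Hv; rewrite lt0n dist0. Qed.

Lemma off0 v : (off v == 0) = (v \in X).
Proof.
rewrite /off; case: ifP => // Hv; have := d_pos (negbT Hv); have := Ha (negbT Hv).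
by case: ifP => C; lia.
Qed.

Lemma off_le v : off v <= Tm.*2.
Proof.
rewrite /off; case: ifP => // Hv; have := Ha (negbT Hv).
by case: ifP => H; lia.
Qed.

Lemma d_sym u v : e u v -> d u <= (d v).+1 /\ d v <= (d u).+1.
Proof. by move=> H; split; apply: dist_edge => //; rewrite esym. Qed.

Lemma edge_window u v : e u v -> exists bb t,
  [/\ t.*2 <= off u <= t.*2.+2, t.*2 <= off v <= t.*2.+2,
      (off u == 0) || (sd u == bb) & (off v == 0) || (sd v == bb)].
Proof.
move=> Huv; have [H1 H2] := d_sym Huv.
have Hx : forall w, w \in X -> d w = 0 by move=> w; rewrite -(dist0 e) => /eqP.
case Hu: (u \in X); case Hv: (v \in X).
- exists true, 0; rewrite /off Hu Hv; by split.
- exists (sd v), 0; rewrite /off Hu Hv !eqxx /=.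
  have := Hx _ Hu; have := d_pos (negbT Hv); have := Ha (negbT Hv).
  by case: ifP => C; split => //; lia.
- exists (sd u), 0; rewrite /off Hu Hv !eqxx /=.
  have := Hx _ Hv; have := d_pos (negbT Hu); have := Ha (negbT Hu).
  by case: ifP => C; split => //; lia.
- have [Hs Ha'] := Hedge (negbT Hu) (negbT Hv) Huv.
  exists (sd u); rewrite /off Hu Hv Hs !eqxx !orbT Ha'.
  have := Ha (negbT Hv).
  case: ifP => Cu; case: ifP => Cv.
  + exists (minn (d u) (d v)); split => //; lia.
  + exists (a v).-1; split => //; lia.
  + exists (a v).-1; split => //; lia.
  + exists (a v).-1; split => //; lia.
Qed.

Lemma window_sub bb t u v :
  t.*2 <= off u <= t.*2.+2 -> t.*2 <= off v <= t.*2.+2 ->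
  (off u == 0) || (sd u == bb) -> (off v == 0) || (sd v == bb) ->
  [set w | minn (key u) (key v) <= key w <= maxn (key u) (key v)] \subset
  [set w | (off w == t.*2) && ((off w == 0) || (sd w == bb))] :|:
  [set w | (off w == t.*2.+1) && (sd w == bb)] :|:
  [set w | (off w == t.*2.+2) && (sd w == bb)].
Proof.
move=> Hu Hv Su Sv; apply/subsetP => w; rewrite !inE /key /kk.
have := off_le u; have := off_le v; have := off_le w; rewrite /K0.
move: Su Sv; case: (sd u); case: (sd v); case: (sd w); case: bb => /=;
  rewrite ?orbF ?orbT ?eqxx ?andbT; lia.
Qed.

Lemma card_Q0 bb t :
  #|[set w | (off w == t.*2) && ((off w == 0) || (sd w == bb))]| <= sig' t.
Proof.
case: t => [|t].
  rewrite /sig'; case/andP: HTm => -> _; rewrite expn0 mul1n subset_leq_card //.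
  by apply/subsetP => w; rewrite !inE -off0 => /andP[].
rewrite /sig'; case: ifP => Ht.
  have Hn : t.+1 < NN T by rewrite /NN; case/andP: HTm => _ H; lia.
  apply: leq_trans (card_dist hdeg X Hn).
  apply: subset_leq_card; apply/subsetP => w; rewrite !inE => /andP[/eqP Hw _].
  move: Hw; rewrite /off; case: ifP => // Hx; case: ifP => C; lia.
rewrite leqn0 cards_eq0; apply/eqP/setP => w; rewrite !inE.
apply/negbTE; apply/negP => /andP[/eqP Hw _]; move: Hw; rewrite /off.
case: ifP => // Hx; have := Ha (negbT Hx); case: ifP => C; lia.
Qed.

Lemma card_Q1 bb t : #|[set w | (off w == t.*2.+1) && (sd w == bb)]| <= L.
Proof.
apply: leq_trans (Hload bb t.+1); apply: subset_leq_card; apply/subsetP => w.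
rewrite !inE => /andP[/eqP Hw ->]; move: Hw; rewrite /off andbT.
case: ifP => // Hx /=; have := Ha (negbT Hx); case: ifP => C; lia.
Qed.

Lemma core b : 0 < b -> (forall t, L + sig' t + sig' t.+1 <= b.+1) -> bandwidth e <= b.
Proof.
move=> b0 Hb; apply: (key_order (k := key)) => // u v Huv.
have [bb [t [Hu Hv Su Sv]]] := edge_window Huv.
apply: leq_trans (subset_leq_card (window_sub Hu Hv Su Sv)) _.
set S0 := [set w | _ && ((off w == 0) || _)].
set S1 := [set w | (off w == t.*2.+1) && _].
set S2 := [set w | (off w == t.*2.+2) && _].
have H0 : #|S0| <= sig' t by exact: card_Q0.
have H1 : #|S1| <= L by exact: card_Q1.
have H2 : #|S2| <= sig' t.+1.
  apply: leq_trans (_ : #|[set w | (off w == t.+1.*2) && ((off w == 0) || (sd w == bb))]| <= _).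
    apply: subset_leq_card; apply/subsetP => w; rewrite !inE => /andP[/eqP -> ->].
    by rewrite orbT doubleS eqxx.
  exact: card_Q0.
have H3 : #|S0 :|: S1 :|: S2| <= #|S0| + #|S1| + #|S2|.
  apply: leq_trans (leq_card_setU _ _) _; rewrite leq_add2r; exact: leq_card_setU.
apply: leq_trans H3 _; apply: leq_trans (Hb t); lia.
Qed.

End Core.


Section Hier.
Variables (T : finType) (e : rel T).
Hypothesis esym : symmetric e.

Definition splits (s : nat) (U : {set T}) :=
  exists S A B : {set T}, [/\ A :|: B :|: S = U, [disjoint A & B] /\
    #|S| <= s, 3 * #|A| <= 2 * #|U|, 3 * #|B| <= 2 * #|U| &
    forall x y, x \in A -> y \in B -> ~~ e x y].

Lemma sep_split U : splits (sepnum e) U.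
Proof.
have Hok : sep_ok e (sepnum e) by rewrite /sepnum; case: ex_minnP.
move/forallP: Hok => /(_ U) /forallP /(_ [set p | e p.1 p.2 && (p.1 \in U) && (p.2 \in U)]).
move/implyP => Himp.
have Hsub : is_subgraph e U [set p | e p.1 p.2 && (p.1 \in U) && (p.2 \in U)].
  apply/forallP => u; apply/forallP => v; rewrite !inE /=; apply/andP; split.
    by apply/implyP => /andP[/andP[-> ->] ->].
  by rewrite esym andbAC.
case/existsP: (Himp Hsub) => S /existsP [A /existsP [B H]].
case/andP: H => /eqP HU /andP[HAB /andP[HAS /andP[HBS /andP[HS /andP[HA /andP[HB Hno]]]]]]; exists S, A, B; split => //.
move=> x y Hx Hy; move/forallP: Hno => /(_ x); rewrite Hx /= => /forallP /(_ y).
rewrite Hy /= !inE /=.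
have HxU : x \in U by rewrite -HU !inE Hx.
have HyU : y \in U by rewrite -HU !inE Hy orbT.
by rewrite HxU HyU !andbT.
Qed.

Variables (s m : nat).
Hypothesis Hsp : forall U, splits s U.
Hypothesis m0 : 0 < m.

Definition hb (N : nat) := if N <= m then 0 else 3 * s * N - s * m.

Lemma hier_arith (u A B : nat) : m < u -> 3 * A <= 2 * u -> 3 * B <= 2 * u ->
  A + B <= u -> m * s + hb A + hb B <= hb u.
Proof.
move=> H1 H2 H3 H4; rewrite /hb; rewrite [u <= m]leqNgt H1 /=.
case: ifP => HA; case: ifP => HB; nia.
Qed.

Lemma hier (N : nat) (U : {set T}) : #|U| = N ->
  exists (X : {set T}) (col : T -> nat),
  [/\ X \subset U,
      (forall u v, u \in U -> v \in U -> u \notin X -> v \notin X -> e u v -> col u = col v),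
      (forall c, #|[set v in U | (v \notin X) && (col v == c)]| <= m) &
      m * #|X| <= hb #|U|].
Proof.
elim: N {-2}N (leqnn N) U => [|N IH] N' HN' U HU;
  (case: (leqP #|U| m) => HUm;
   [exists set0, (fun _ => 0); split => //; [exact: sub0set| |by rewrite cards0 muln0];
    move=> c; apply: leq_trans HUm; apply: subset_leq_card; apply/subsetP => w;
    by rewrite !inE => /andP[] | ]).
  by move: HN'; rewrite leqn0 -HU => /eqP Hc; rewrite Hc in HUm.
have [S [A [B [HU' [HAB HS] HA HB Hno]]]] := Hsp U.
have HUpos : 0 < #|U| by apply: leq_trans HUm.
have [XA [colA [HXA HeA HcA HbA]]] : exists X col, _ := IH #|A| ltac:(lia) A erefl.
have [XB [colB [HXB HeB HcB HbB]]] : exists X col, _ := IH #|B| ltac:(lia) B erefl.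
have HsubA : A \subset U by rewrite -HU' -setUA subsetUl.
have HsubB : B \subset U by rewrite -HU' setUAC subsetUr.
have HsubS : S \subset U by rewrite -HU' subsetUr.
have HmemU : forall w, w \in U -> [\/ w \in A, w \in B | w \in S].
  by move=> w; rewrite -HU' !inE => /orP[/orP[H|H]|H]; [constructor 1|constructor 2|constructor 3].
have HdAB : forall w, w \in A -> w \in B -> False.
  by move=> w Ha Hb; move: (disjointFr HAB Ha); rewrite Hb.
exists (S :|: XA :|: XB), (fun v => if v \in A then (colA v).*2 else (colB v).*2.+1).
split.
- apply/subsetP => w; rewrite !inE => /orP[/orP[H|H]|H].
  + exact: (subsetP HsubS).
  + exact: (subsetP HsubA _ (subsetP HXA _ H)).
  + exact: (subsetP HsubB _ (subsetP HXB _ H)).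
- move=> u v Hu Hv; rewrite !inE !negb_or => /andP[/andP[Hus HuA] HuB] /andP[/andP[Hvs HvA] HvB] Huv.
  case: (HmemU u Hu) => Hu'; last by rewrite Hu' in Hus.
  + case: (HmemU v Hv) => Hv'; last by rewrite Hv' in Hvs.
    * by rewrite Hu' Hv' (HeA u v).
    * by move: (Hno u v Hu' Hv'); rewrite Huv.
  + case: (HmemU v Hv) => Hv'; last by rewrite Hv' in Hvs.
    * by move: (Hno v u Hv' Hu'); rewrite esym Huv.
    * have -> : (u \in A) = false by apply/negP => Ha; exact: (HdAB u Ha Hu').
      have -> : (v \in A) = false by apply/negP => Ha; exact: (HdAB v Ha Hv').
      by rewrite (HeB u v).
- move=> c; case Hc: (odd c).
  + apply: leq_trans (HcB c./2); apply: subset_leq_card; apply/subsetP => w.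
    rewrite !inE !negb_or => /andP[Hw /andP[/andP[/andP[Hws HwA] HwB] /eqP Hcw]].
    case: (HmemU w Hw) => Hw'; last by rewrite Hw' in Hws.
    * by rewrite Hw' in Hcw; rewrite -Hcw odd_double in Hc.
    * have HnA : (w \in A) = false by apply/negP => Ha; exact: (HdAB w Ha Hw').
      rewrite HnA in Hcw; rewrite Hw' HwB /= -Hcw /= uphalf_double eqxx //.
  + apply: leq_trans (HcA c./2); apply: subset_leq_card; apply/subsetP => w.
    rewrite !inE !negb_or => /andP[Hw /andP[/andP[/andP[Hws HwA] HwB] /eqP Hcw]].
    case: (HmemU w Hw) => Hw'; last by rewrite Hw' in Hws.
    * by rewrite Hw' in Hcw; rewrite Hw' HwA /= -Hcw doubleK eqxx.
    * have HnA : (w \in A) = false by apply/negP => Ha; exact: (HdAB w Ha Hw').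
      by rewrite HnA in Hcw; rewrite -Hcw /= odd_double in Hc.
- have HcX : #|S :|: XA :|: XB| <= #|S| + #|XA| + #|XB|.
    apply: leq_trans (leq_card_setU _ _) _; rewrite leq_add2r; exact: leq_card_setU.
  have HAB' : #|A| + #|B| <= #|U|.
    rewrite -cardsUI (_ : A :&: B = set0) ?cards0 ?addn0.
      by apply: subset_leq_card; rewrite subUset HsubA HsubB.
    by apply/setP => w; rewrite !inE; apply/negP => /andP[Ha Hb]; exact: (HdAB w Ha Hb).
  apply: leq_trans (hier_arith HUm HA HB HAB').
  apply: leq_trans (leq_mul (leqnn m) HcX) _.
  rewrite !mulnDr; apply: leq_add; [apply: leq_add|] => //.
  by rewrite leq_mul2l HS orbT.
Qed.

End Hier.


Section Bin.
Variables (T : finType) (X : {set T}) (col : T -> nat) (m W : nat).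
Hypothesis Hpiece : forall c, #|[set v in [set: T] | (v \notin X) && (col v == c)]| <= m.
Hypothesis W0 : 0 < W.

Definition pre v := #|[set w | (w \notin X) && (col w < col v)]|.
Definition bin v := pre v %/ W.

Lemma pre_lt v : pre v < #|T|.
Proof.
have H1 := cardsC1 v; have Hp : 0 < #|T| by apply/card_gt0P; exists v.
apply: (@leq_trans #|[set~ v]|.+1); last by rewrite H1; lia.
rewrite ltnS subset_leq_card //; apply/subsetP => w; rewrite !inE.
by apply: contraTneq => ->; rewrite ltnn andbF.
Qed.

Lemma pre_sub v w : col v <= col w ->
  [set x | (x \notin X) && (col x < col v)] \subset [set x | (x \notin X) && (col x < col w)].
Proof.
move=> H; apply/subsetP => x; rewrite !inE => /andP[-> Hx] /=; exact: leq_trans Hx H.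
Qed.

Lemma bin_load j : #|[set v | (v \notin X) && (bin v == j)]| < W + m.
Proof.
set Bj := [set v | _ && _].
case: (set_0Vmem Bj) => [->|[v0 Hv0]]; first by rewrite cards0; lia.
case: (arg_maxnP col Hv0) => vh Hvh Hmax.
case: (arg_minnP col Hv0) => vl Hvl Hmin.
have Hle : col vl <= col vh by apply: Hmin.
have Hsub : Bj \subset ([set x | (x \notin X) && (col x < col vh)] :\:
                        [set x | (x \notin X) && (col x < col vl)]) :|:
                       [set v in [set: T] | (v \notin X) && (col v == col vh)].
  apply/subsetP => w Hw; have := Hmax w Hw; have := Hmin w Hw.
  move: Hw; rewrite !inE => /andP[-> _] /= H1 H2.
  rewrite -leqNgt H1 /= ltn_neqAle H2 andbT.
  by case: (col w == col vh).
have HD : #|[set x | (x \notin X) && (col x < col vh)] :\: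
            [set x | (x \notin X) && (col x < col vl)]| = pre vh - pre vl.
  by rewrite cardsD (setIidPr (pre_sub Hle)).
have Hbh : bin vh = j by have : vh \in Bj := Hvh; rewrite /Bj inE => /andP[_ /eqP].
have Hbl : bin vl = j by have : vl \in Bj := Hvl; rewrite /Bj inE => /andP[_ /eqP].
have Hp := Hpiece (col vh).
have := leq_card_setU ([set x | (x \notin X) && (col x < col vh)] :\:
            [set x | (x \notin X) && (col x < col vl)])
            [set v in [set: T] | (v \notin X) && (col v == col vh)].
move=> /(leq_trans (subset_leq_card Hsub)).
rewrite HD; move: Hbh Hbl; rewrite /bin => Hbh Hbl.
have := leq_trunc_div (pre vl) W. have := ltn_ceil (pre vh) W0.
rewrite Hbh Hbl; nia.
Qed.

End Bin.


Lemma pow_poly e : 11 <= e -> 16 * (e * e) <= 2 ^ e.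
Proof.
elim: e => [|e IH] //; rewrite leq_eqVlt => /orP[/eqP <-|H] //.
have H1 := IH H; rewrite expnS.
have H2 : e.+1 * e.+1 <= 2 * (e * e) by nia.
apply: leq_trans (_ : 2 * (16 * (e * e)) <= _); last by rewrite leq_mul2l H1.
lia.
Qed.

Lemma pow_D e D : 1 <= e -> 2 <= D -> 2 ^ e * D.+1 <= 3 * D ^ e.
Proof.
move=> He HD; elim: e He => [|e IH] //; case: e IH => [|e] IH _.
  by rewrite !expn1; lia.
have H := IH erefl.
rewrite expnS (expnS D) -mulnA.
apply: leq_trans (_ : 2 * (3 * D ^ e.+1) <= _); first by rewrite leq_mul2l H.
rewrite mulnCA leq_mul2l; apply/orP; right; by rewrite leq_mul2r HD orbT.
Qed.

Lemma arith_small j n A Bm Y x :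
  8 <= j <= 11 -> 4 * A <= n -> (j - 3) * Bm <= n -> x <= 3 * (j - 3) * Y ->
  2 ^ j * Y <= 3 * n -> j.+1 * (A + Bm + x) <= 6 * n.
Proof.
move=> Hj HA HB Hx HY.
have : (j == 8) || (j == 9) || (j == 10) || (j == 11) by lia.
move=> /orP[/orP[/orP[]|]|] /eqP Ej; subst j; move: HY; rewrite /=; lia.
Qed.
Lemma arith_big j Tm n A Bm Z x e :
  12 <= j -> 4 * Tm <= j <= 4 * Tm + 3 -> e = j - Tm + 2 ->
  (2 * Tm) * A <= n -> (j - 3) * Bm <= n -> x <= 3 * (j - 3) * Z ->
  2 ^ e * Z <= 3 * n -> j.+1 * (A + Bm + x) <= 6 * n.
Proof.
move=> Hj HT He HA HB Hx HZ.
have He11 : 11 <= e by lia.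
have Hp := pow_poly He11.
have H1 : 3 * (j.+1 * A) <= 8 * n.
  have H : 3 * j.+1 <= 8 * (2 * Tm) by lia.
  rewrite mulnA; apply: leq_trans (leq_mul H (leqnn A)) _.
  by rewrite -mulnA leq_mul2l HA orbT.
have H2 : 9 * (j.+1 * Bm) <= 13 * n.
  have H : 9 * j.+1 <= 13 * (j - 3) by lia.
  rewrite mulnA; apply: leq_trans (leq_mul H (leqnn Bm)) _.
  by rewrite -mulnA leq_mul2l HB orbT.
have H3 : 9 * (j.+1 * (j - 3)) <= 2 ^ e.
  apply: leq_trans Hp.
  have Ha : 3 * j.+1 <= 4 * e by lia.
  have Hb : 3 * (j - 3) <= 4 * e by lia.
  have := leq_mul Ha Hb; lia.
have H4 : 3 * (j.+1 * x) <= 3 * n.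
  apply: leq_trans HZ.
  apply: leq_trans (_ : 3 * (j.+1 * (3 * (j - 3) * Z)) <= _).
    by rewrite leq_mul2l leq_mul2l Hx !orbT.
  have := leq_mul H3 (leqnn Z); lia.
lia.
Qed.


Section Main.
Variables (T : finType) (e : rel T) (D : nat).
Hypothesis esym : symmetric e.
Hypothesis hdeg : maxdeg_le e D.
Hypothesis D2 : 2 <= D.

Lemma sepnum_pos : 0 < #|T| -> 0 < sepnum e.
Proof.
case/card_gt0P => v0 _.
have [S [A [B [HU [HAB HS] HA HB Hno]]]] := sep_split esym [set v0].
rewrite cards1 in HA HB.
have HA0 : #|A| = 0 by lia.
have HB0 : #|B| = 0 by lia.
move/eqP: HA0; rewrite cards_eq0 => /eqP HA0.
move/eqP: HB0; rewrite cards_eq0 => /eqP HB0.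
rewrite HA0 HB0 !set0U in HU; rewrite HU cards1 in HS; exact: HS.
Qed.

Lemma bw_triv : 0 < #|T| -> bandwidth e <= #|T|.
Proof.
move=> Hn; apply: bw_le; rewrite /bw_ok Hn /=.
apply/existsP; exists [ffun x => enum_rank x]; apply/andP; split.
  by apply/injectiveP => x y; rewrite !ffunE => /enum_rank_inj.
apply/forallP => u; apply/forallP => v; apply/implyP => _; rewrite !ffunE.
by apply/andP; split; apply: leq_trans (leq_subr _ _) _; apply: ltnW.
Qed.

Lemma regime1 j : 6 <= j <= 7 -> sepnum e * D ^ j <= #|T| -> 0 < sepnum e ->
  exists b, bandwidth e <= b /\ j.+1 * b <= 6 * #|T|.
Proof.
move=> Hj Hs s0.
have Hn : 0 < #|T|.
  apply: leq_trans Hs; rewrite muln_gt0 s0 expn_gt0 /=; lia.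
have [S [A [B [HU [HAB HS] HA HB Hno]]]] := sep_split esym [set: T].
rewrite cardsT in HA HB.
have HmemU : forall w, [\/ w \in A, w \in B | w \in S].
  by move=> w; move: (in_setT w); rewrite -HU !inE => /orP[/orP[H|H]|H];
    [constructor 1|constructor 2|constructor 3].
have HdAB : forall w, w \in A -> w \in B -> False.
  by move=> w Ha Hb; move: (disjointFr HAB Ha); rewrite Hb.
set L := maxn #|A| #|B|.
exists (L + #|S|).+1; split.
  apply: (@core T e D esym hdeg S (fun v => v \in A) (fun _ => 1) 1 L) => //.
  - move=> u v Hu Hv Huv; split => //.
    case: (HmemU u) => Hu'; last by rewrite Hu' in Hu.
    + case: (HmemU v) => Hv'; last by rewrite Hv' in Hv.
      * by rewrite Hu' Hv'.
      * by move: (Hno u v Hu' Hv'); rewrite Huv.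
    + case: (HmemU v) => Hv'; last by rewrite Hv' in Hv.
      * by move: (Hno v u Hv' Hu'); rewrite esym Huv.
      * have -> : (u \in A) = false by apply/negP => Ha; exact: (HdAB u Ha Hu').
        by have -> : (v \in A) = false by apply/negP => Ha; exact: (HdAB v Ha Hv').
  - move=> bb t; case: bb.
      apply: leq_trans (leq_maxl _ _); apply: subset_leq_card; apply/subsetP => w.
      by rewrite !inE => /andP[/andP[_ /eqP]].
    apply: leq_trans (leq_maxr _ _); apply: subset_leq_card; apply/subsetP => w.
    rewrite !inE => /andP[/andP[Hw /eqP Ha] _].
    by case: (HmemU w) => Hw' //; [rewrite Hw' in Ha|rewrite Hw' in Hw].
  - move=> t; rewrite /sig'; case: t => [|t] /=; rewrite ?expn0 ?mul1n addn0; lia.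
have HD : 2 ^ 6 <= D ^ j.
  apply: leq_trans (_ : D ^ 6 <= _); first by rewrite leq_exp2r.
  by rewrite leq_pexp2l //; [lia|lia].
have HL : 3 * L <= 2 * #|T| by rewrite /L; lia.
have Hs' : 64 * sepnum e <= #|T|.
  apply: leq_trans Hs; rewrite mulnC leq_mul2l HD orbT //.
have Hj8 : j.+1 <= 8 by lia.
apply: leq_trans (leq_mul Hj8 (leqnn _)) _; lia.
Qed.
Lemma regime2 j : 8 <= j -> sepnum e * D ^ j <= #|T| -> 0 < sepnum e ->
  exists b, bandwidth e <= b /\ j.+1 * b <= 6 * #|T|.
Proof.
move=> Hj Hs s0.
set n := #|T|; set s := sepnum e.
have HDj : 2 ^ j <= D ^ j by rewrite leq_exp2r //; lia.
have Hjn : 2 ^ j <= n.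
  apply: leq_trans Hs; apply: leq_trans HDj _; rewrite leq_pmull //.
have Hjlt : j < 2 ^ j := ltn_expl j (isT : 1 < 2).
set Tm := j %/ 4.
have HTm2 : 2 <= Tm by rewrite /Tm; lia.
have HTmj : 4 * Tm <= j <= 4 * Tm + 3 by rewrite /Tm; lia.
set M := j - 3.
set m := (n %/ M).+1.
set W := (n %/ (2 * Tm)).+1.
have HM0 : 0 < M by rewrite /M; lia.
have HmM : (m - 1) * M <= n by rewrite /m subn1 /= leq_divM.
have HmM' : n <= m * M by rewrite /m; have := ltn_ceil n HM0; lia.
have HW : (W - 1) * (2 * Tm) <= n by rewrite /W subn1 /= leq_divM.
have HW' : n < W * (2 * Tm).
  by rewrite /W -ltn_divLR //; lia.
have m0 : 0 < m by [].
have [X [col [_ Hcol Hpiece HbX]]] := hier esym (sep_split esym) m0 (N := n) (U := [set: T]) (cardsT T).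
have HX : #|X| * m <= 3 * s * n.
  apply: leq_trans (_ : hb s m #|[set: T]| <= _); first by rewrite mulnC.
  rewrite /hb cardsT; case: ifP => _ //; exact: leq_subr.
have HX' : #|X| <= 3 * s * M.
  rewrite -(leq_pmul2r m0); apply: leq_trans HX _.
  by rewrite -(mulnA (3 * s)) leq_mul2l (mulnC M) HmM' orbT.
have W0 : 0 < W by [].
have Hload := bin_load Hpiece W0.
have Hbin : forall v, bin X col W v < 2 * Tm.
  move=> v; rewrite /bin ltn_divLR //; apply: leq_trans (pre_lt X col W0 v) _.
  by rewrite mulnC; exact: ltnW HW'.
set x' := #|X| * (D ^ (Tm - 2) + D ^ (Tm - 1)).
exists ((W - 1) + (m - 1) + x'); split.
  apply: (@core T e D esym hdeg X (fun v => bin X col W v < Tm)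
           (fun v => if bin X col W v < Tm then (bin X col W v).+1 else (bin X col W v - Tm).+1)
           Tm (W + m).-1).
  - move=> v _; have := Hbin v; case: ifP => H /=; lia.
  - move=> u v Hu Hv Huv; have Hc := Hcol u v (in_setT u) (in_setT v) Hu Hv Huv.
    by rewrite /bin /pre Hc.
  - move=> bb t; rewrite -ltnS prednK; last by lia.
    apply: leq_trans (Hload (if bb then t.-1 else t.-1 + Tm)).
    rewrite ltnS; apply: subset_leq_card; apply/subsetP => w; rewrite !inE.
    case/andP => /andP[-> /eqP <-] /eqP <- /=.
    by case: ifP => H; case: ifP => H'; lia.
  - apply/andP; split; rewrite -/n; lia.
  - have : 0 < W - 1 by rewrite /W subn1 /= divn_gt0; lia.
    lia.
  - move=> t.
    have HP : forall t', t' <= Tm - 2 -> D ^ t' <= D ^ (Tm - 2).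
      by move=> t' Ht; rewrite leq_pexp2l //; lia.
    have HP' : forall t', t' <= Tm - 1 -> D ^ t' <= D ^ (Tm - 1).
      by move=> t' Ht; rewrite leq_pexp2l //; lia.
    have Hsig : sig' D X Tm t + sig' D X Tm t.+1 <= x'.
      rewrite /sig' /x' mulnDr.
      case: ifP => Ha; case: ifP => Hb; rewrite ?addn0 ?add0n //.
      + apply: leq_add; rewrite mulnC leq_mul2l;
          apply/orP; right; [apply: HP|apply: HP']; lia.
      + apply: leq_trans (leq_addl _ _); rewrite mulnC leq_mul2l; apply/orP; right.
        apply: HP'; lia.
      + lia.
    move: Hsig; rewrite /W /m; move: (sig' D X Tm t) (sig' D X Tm t.+1) x' => a1 a2 a3.
    lia.
have HXs : #|X| <= 3 * s * M := HX'.
have HsD : s * D ^ j <= n := Hs.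
have HW2 : (2 * Tm) * (W - 1) <= n by rewrite mulnC.
have HmM2 : (j - 3) * (m - 1) <= n by rewrite mulnC.
have HDe : D ^ (Tm - 1) = D ^ (Tm - 2) * D.
  by rewrite -expnSr; congr (_ ^ _); lia.
have Hx'' : x' = #|X| * (D ^ (Tm - 2) * D.+1).
  by rewrite /x' HDe mulnSr addnC.
case: (leqP j 11) => Hj11.
  have ETm : Tm = 2 by rewrite /Tm; lia.
  apply: (@arith_small j n (W - 1) (m - 1) (s * D.+1) x').
  - by rewrite Hj Hj11.
  - by move: HW2; rewrite ETm.
  - exact: HmM2.
  - rewrite Hx'' ETm subnn expn0 mul1n.
    have := leq_mul HXs (leqnn D.+1); rewrite /M; lia.
  - move: (pow_D (leq_trans (isT : 1 <= 8) Hj) D2) => H.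
    rewrite mulnCA; apply: leq_trans (_ : s * (3 * D ^ j) <= _).
      by rewrite leq_mul2l H orbT.
    by rewrite mulnCA leq_mul2l HsD orbT.
apply: (@arith_big j Tm n (W - 1) (m - 1) (s * D ^ (Tm - 2) * D.+1) x' (j - Tm + 2)).
- lia.
- exact: HTmj.
- by [].
- exact: HW2.
- exact: HmM2.
- rewrite Hx''.
  have := leq_mul HXs (leqnn (D ^ (Tm - 2) * D.+1)); rewrite /M; lia.
- have He1 : 1 <= j - Tm + 2 by lia.
  have H := pow_D He1 D2.
  have Hsum : D ^ (Tm - 2) * D ^ (j - Tm + 2) = D ^ j by rewrite -expnD; congr (_ ^ _); lia.
  apply: leq_trans (_ : s * D ^ (Tm - 2) * (3 * D ^ (j - Tm + 2)) <= _).
    have := leq_mul (leqnn (s * D ^ (Tm - 2))) H; lia.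
  by rewrite mulnCA -mulnA Hsum leq_mul2l HsD orbT.
Qed.
End Main.

Unset Implicit Arguments.

Lemma nat_bound (D : nat) (T : finType) (e : rel T) :
  (2 <= D)%N -> simple_graph e -> (1 <= #|T|)%N -> maxdeg_le e D ->
  (sepnum e < #|T|)%N ->
  exists j b, [/\ (bandwidth e <= b)%N, (j.+1 * b <= 6 * #|T|)%N,
     (0 < sepnum e)%N & (#|T| < sepnum e * D ^ j.+1)%N].
Proof.
move=> HD [esym _] Hn hdeg Hsn.
have s0 := sepnum_pos esym HD Hn.
set n := #|T| in Hn Hsn *; set s := sepnum e in s0 Hsn *.
set j := trunc_log D (n %/ s).
have Hq : (0 < n %/ s)%N by rewrite divn_gt0 // ltnW.
have H1 : (s * D ^ j <= n)%N.
  by rewrite mulnC -leq_divRL //; apply: trunc_logP.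
have H2 : (n < s * D ^ j.+1)%N.
  by rewrite mulnC -ltn_divLR //; apply: trunc_log_ltn.
exists j.
case: (leqP j 5) => Hj5.
  exists n; split => //; first exact: bw_triv.
  by rewrite leq_mul2r ltnS Hj5 orbT.
case: (leqP j 7) => Hj7.
  have [b [Hb1 Hb2]] := regime1 esym hdeg HD (j := j) ltac:(lia) H1 s0.
  by exists b.
have [b [Hb1 Hb2]] := regime2 esym hdeg HD (j := j) ltac:(lia) H1 s0.
by exists b.
Qed.

From Stdlib Require Import Reals Lra.

Lemma INR_expn (D k : nat) : INR (expn D k) = (INR D ^ k)%R.
Proof.
elim: k => [|k IH]; first by rewrite expn0.
by rewrite expnS mult_INR IH /=.
Qed.

Theorem theorem5 (D : nat) (T : finType) (e : rel T) :
  (2 <= D)%N ->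
  simple_graph e ->
  (1 <= #|T|)%N ->
  maxdeg_le e D ->
  (sepnum e < #|T|)%N ->
  Rle (INR (bandwidth e))
      (Rdiv (Rmult (INR 6) (INR #|T|))
            (Rdiv (ln (Rdiv (INR #|T|) (INR (sepnum e)))) (ln (INR D)))).
Proof.
move=> HD Hg Hn hdeg Hsn.
have [j [b [Hb1 Hb2 s0 Hlt]]] := nat_bound D T e HD Hg Hn hdeg Hsn.
set n := #|T| in Hn Hsn Hb2 Hlt *; set s := sepnum e in s0 Hsn Hlt *.
have Rs0 : (0 < INR s)%R by apply: lt_0_INR; apply/ltP.
have Rsn : (INR s < INR n)%R by apply: lt_INR; apply/ltP.
have RD : (1 < INR D)%R by apply: (lt_INR 1); apply/ltP.
have Rlt : (INR n < INR s * INR D ^ j.+1)%R.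
  by rewrite -INR_expn -mult_INR; apply: lt_INR; apply/ltP.
have Rb2 : (INR j.+1 * INR b <= 6 * INR n)%R.
  have := le_INR _ _ (elimT leP Hb2); rewrite -!multE !mult_INR => H.
  by rewrite (_ : INR 6 = 6%R) in H; [exact: H|simpl; lra].
have Rb1 : (INR (bandwidth e) <= INR b)%R by apply: le_INR; apply/leP.
have Rb0 : (0 <= INR b)%R by apply: pos_INR.
set q := (INR n / INR s)%R.
have Hq1 : (1 < q)%R.
  rewrite /q; apply: (Rmult_lt_reg_r (INR s)) => //.
  rewrite /Rdiv Rmult_assoc Rinv_l; lra.
have HqD : (q < INR D ^ j.+1)%R.
  rewrite /q; apply: (Rmult_lt_reg_r (INR s)) => //.
  rewrite /Rdiv Rmult_assoc Rinv_l; lra.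
have HK : (0 < ln q)%R by rewrite -ln_1; apply: ln_increasing; lra.
have HL : (0 < ln (INR D))%R by rewrite -ln_1; apply: ln_increasing; lra.
have HKL : (ln q < INR j.+1 * ln (INR D))%R.
  rewrite -ln_pow; last lra.
  by apply: ln_increasing => //; lra.
have -> : (INR 6 * INR n / (ln q / ln (INR D)) = (6 * INR n * ln (INR D)) / ln q)%R.
  rewrite (_ : INR 6 = 6%R); last by simpl; lra.
  by field; split; lra.
apply: (Rmult_le_reg_r (ln q)) => //.
rewrite /Rdiv Rmult_assoc Rinv_l; last lra.
rewrite Rmult_1_r.
apply: Rle_trans (_ : INR b * ln q <= _)%R.
  by apply: Rmult_le_compat_r; lra.
apply: Rle_trans (_ : INR b * (INR j.+1 * ln (INR D)) <= _)%R.
  by apply: Rmult_le_compat_l; lra.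
rewrite -Rmult_assoc (Rmult_comm (INR b)).
by apply: Rmult_le_compat_r; lra.
Qed.
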